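(* Let $F:X\rightrightarrows Y$ be a set-valued map with nonempty values, $\varphi:X\to\mathbb R$ a function, $\bar x\in X$, $e\in K\setminus\{0\}$, and $f=\varphi(\cdot)e$. If $\widehat\partial\varphi(\bar x)\neq\emptyset$, then $$\widehat\partial(F-f)(\bar x)\subset\bigcap_{t\in\widehat\partial f(\bar x),\ y^*\in K_e^+}\Big(\widehat\partial F(\bar x)-y^*(e)^{-1}(y^*\circ t)e\Big),$$ where $(F-f)(x)=\{y-\varphi(x)e: y\in F(x)\}$ and $y^*(e)^{-1}(y^*\circ t)e$ denotes the operator $x\mapsto y^*(e)^{-1}y^*(t(x))\,e$.
   Context: $X,Y$ are real normed spaces with duals $X^*,Y^*$; $B(X,Y)$ is the space of bounded linear operators $X\to Y$; $B(x,\delta)$ is the open ball and $D_Y$ the closed unit ball. $K\subset Y$ is a pointed closed convex cone, $K^+=\{y^*\in Y^*: y^*(k)\ge0\ \forall k\in K\}$ and $K_e^+=\{y^*\in K^+: y^*(e)\ne0\}$. For $G:X\rightrightarrows Y$ (or a function $G:X\to Y$, via $x\mapsto\{G(x)\}$), $\widehat\partial G(\bar x)$ is the set of all $T\in B(X,Y)$ such that for every $\varepsilon>0$ there is $\delta>0$ with $G(x)+K\subset G(\bar x)+K+T(x-\bar x)+\varepsilon\|x-\bar x\|D_Y$ for all $x\in B(\bar x,\delta)$. $\widehat\partial\varphi(\bar x)$ is the usual Fréchet subdifferential of the real function $\varphi$. *)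

(* Defs.v *)
From HB Require Import structures.
From mathcomp Require Import all_boot all_order all_algebra.
From mathcomp Require Import all_classical all_reals all_analysis.
Set Implicit Arguments. Unset Strict Implicit. Unset Printing Implicit Defensive.
Import Order.TTheory GRing.Theory Num.Theory.
Import numFieldNormedType.Exports.
Local Open Scope classical_set_scope.
Local Open Scope ring_scope.

Section Defs.
Variable R : realType.

Definition bounded_linear (X Y : normedModType R) (T : X -> Y) : Prop :=
  (forall (a : R) (u v : X), T (a *: u + v) = a *: T u + T v) /\
  (exists M : R, forall u : X, `|T u| <= M * `|u|).

Definition dual_elt (Y : normedModType R) (ys : Y -> R) : Prop :=
  (forall (a : R) (u v : Y), ys (a *: u + v) = a * ys u + ys v) /\
  (exists M : R, forall u : Y, `|ys u| <= M * `|u|).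

Definition pointed_closed_convex_cone (Y : normedModType R) (K : set Y) : Prop :=
  K 0 /\
  (forall (l : R) (u : Y), 0 <= l -> K u -> K (l *: u)) /\
  (forall (l : R) (u v : Y), 0 <= l <= 1 -> K u -> K v ->
      K (l *: u + (1 - l) *: v)) /\
  closed K /\
  (forall u : Y, K u -> K (- u) -> u = 0).

Definition Kplus (Y : normedModType R) (K : set Y) : set (Y -> R) :=
  [set ys | dual_elt ys /\ forall k, K k -> 0 <= ys k].

Definition Keplus (Y : normedModType R) (K : set Y) (e : Y) : set (Y -> R) :=
  [set ys | Kplus K ys /\ ys e != 0].

(* Frechet subdifferential (w.r.t. the cone K) of a set-valued map G at xb:
   T in B(X,Y) such that for every eps > 0 there is delta > 0 with
   G(x) + K \subset G(xb) + K + T(x - xb) + eps ||x - xb|| D_Y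
   for all x in B(xb, delta). *)
Definition frechet_subdiff_sv (X Y : normedModType R) (K : set Y)
    (G : X -> set Y) (xb : X) : set (X -> Y) :=
  [set T | bounded_linear T /\
    forall eps : R, 0 < eps -> exists2 delta : R, 0 < delta &
      forall x : X, `|x - xb| < delta ->
        forall y k, G x y -> K k ->
          exists y', exists k', exists d : Y,
            [/\ G xb y', K k', `|d| <= 1 &
              y + k = y' + k' + T (x - xb) + (eps * `|x - xb|) *: d]].

Definition sv_of (X Y : Type) (g : X -> Y) : X -> set Y := fun x => [set g x].

Definition frechet_subdiff (X : normedModType R) (phi : X -> R) (xb : X)
    : set (X -> R) :=
  [set xs | dual_elt xs /\
    forall eps : R, 0 < eps -> exists2 delta : R, 0 < delta &
      forall x : X, `|x - xb| < delta ->
        phi x - phi xb - xs (x - xb) >= - (eps * `|x - xb|)].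

Definition sv_sub (X Y : normedModType R) (F : X -> set Y) (f : X -> Y)
    : X -> set Y := fun x => [set y - f x | y in F x].

End Defs.

(* Main.v *)
Require Import Defs.
From HB Require Import structures.
From mathcomp Require Import all_boot all_order all_algebra.
From mathcomp Require Import all_classical all_reals all_analysis.
From mathcomp Require Import ring lra.
Import Order.TTheory GRing.Theory Num.Theory.
Import numFieldNormedType.Exports.
Local Open Scope classical_set_scope.
Local Open Scope ring_scope.

Lemma rearr (V : zmodType) (y k fx fxb y0 k' Tz D P Q M : V):
  y - fx + k = y0 - fxb + k' + Tz + D ->
  fx - fxb = P + Q + M ->
  y + k = y0 + (k' + P) + (Tz + Q) + (D + M).
Proof.
move=> h1 h2.
have -> : y + k = (y - fx + k) + fx by rewrite addrAC subrK.
rewrite h1 -(subrK fxb fx) h2.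
rewrite !addrA.
rewrite -!(addrAC _ fxb) addrK.
by rewrite (addrAC _ D P) (addrAC _ Tz P) (addrAC _ D Q).
Qed.

Theorem mainTheorem13 (R : realType) (X Y : normedModType R) (K : set Y)
  (F : X -> set Y) (phi : X -> R) (xb : X) (e : Y) :
  pointed_closed_convex_cone K ->
  (forall x, exists y, F x y) ->
  K e -> e != 0 ->
  frechet_subdiff phi xb !=set0 ->
  let f := fun x : X => phi x *: e in
  forall T : X -> Y, frechet_subdiff_sv K (sv_sub F f) xb T ->
  forall t : X -> Y, frechet_subdiff_sv K (sv_of f) xb t ->
  forall ys : Y -> R, Keplus K e ys ->
  exists2 S : X -> Y, frechet_subdiff_sv K F xb S &
    T = (fun x => S x - ((ys e)^-1 * ys (t x)) *: e).
Proof.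
move=> [K0 [Kscale [Kconv _]]] _ Ke en0 _ f T [[Tlin [MT HMT]] HT]
  t [[tlin [Mt HMt]] Ht] ys [[[yslin [Mys HMys]] yspos] yse0].
have ys0 : ys 0 = 0.
  have := yslin 1 0 0; rewrite scale1r addr0 mul1r; lra.
have ysZ a u : ys (a *: u) = a * ys u.
  by have := yslin a u 0; rewrite !addr0 ys0 addr0.
have yse : 0 < ys e by rewrite lt_def yse0 yspos.
pose c := `|Mys| + 1.
have c0 : 0 < c by rewrite /c ltr_pwDr.
have c0' : 0 <= c by exact: ltW.
have ysb u : `|ys u| <= c * `|u|.
  apply: le_trans (HMys u) _; apply: ler_wpM2r => //.
  by rewrite /c (le_trans (real_ler_norm _)) ?num_real // lerDl.
have KD u v : K u -> K v -> K (u + v).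
  move=> Ku Kv.
  have h2 : 0 <= (2^-1:R) <= 1.
    by apply/andP; split; lra.
  have := Kscale 2 _ _ (Kconv _ _ _ h2 Ku Kv).
  have -> : (1 - 2^-1 : R) = 2^-1 by field.
  rewrite scalerDr !scalerA mulfV ?pnatr_eq0 // !scale1r; apply; lra.
have en : 0 < `|e| by rewrite normr_gt0.
pose S := fun x => T x + ((ys e)^-1 * ys (t x)) *: e.
exists S; last by apply: funext => x; rewrite /S addrK.
split.
  split.
    move=> a u v; rewrite /S Tlin tlin yslin.
    rewrite mulrDr scalerDl scalerDr scalerA mulrCA.
    by rewrite !addrA (addrAC _ (T v)).
  exists (MT + (ys e)^-1 * c * `|Mt| * `|e|) => u.
  rewrite /S (le_trans (ler_normD _ _)) // normrZ normrM.
  rewrite mulrDl lerD ?HMT //.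
  rewrite ger0_norm; last by rewrite invr_ge0 ltW.
  have h : `|ys (t u)| <= c * `|Mt| * `|u|.
    rewrite (le_trans (ysb _)) // -mulrA ler_wpM2l //.
    by apply: le_trans (HMt u) _; rewrite ler_wpM2r // real_ler_norm ?num_real.
  have h' : 0 <= (ys e)^-1 * `|e| by rewrite mulr_ge0 // invr_ge0 ltW.
  nra.
have ysD u v : ys (u + v) = ys u + ys v.
  by have := yslin 1 u v; rewrite scale1r mul1r.
move=> eps eps0.
have eps2 : 0 < eps / 2 by lra.
pose eps1 := eps * ys e / (2 * c * `|e|).
have eps10 : 0 < eps1.
  by rewrite /eps1 divr_gt0 // ?mulr_gt0.
have [dT dT0 HdT] := HT _ eps2.
have [d1 d10 Hd1] := Ht _ eps10.
exists (Num.min dT d1); first by rewrite lt_min dT0 d10.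
move=> x hx y k Fxy Kk.
move: hx; rewrite lt_min => /andP [hxT hx1].
have n0 : 0 <= `|x - xb| by [].
have [y1 [k1 [dv [hy1 Kk1 hdv heq1]]]] := Hd1 x hx1 (f x) 0 (erefl (f x)) K0.
rewrite /sv_of /= in hy1; subst y1.
set n := `|x - xb| in n0 hxT hx1 heq1 *.
have h1 := congr1 ys heq1.
rewrite addr0 !ysD /f !ysZ in h1.
have hk1 := yspos _ Kk1.
have hdv' : - c <= ys dv.
  have := ysb dv; rewrite ler_norml => /andP [h _].
  apply: le_trans h; rewrite lerN2.
  have : 0 <= `|dv| by []. nra.
pose q := (ys e)^-1 * ys (t (x - xb)).
have hq : q * ys e = ys (t (x - xb)) by rewrite /q mulrC mulrA mulfV // mul1r.
pose r := phi x - phi xb - q.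
have h3 : - (eps1 * n * c) <= r * ys e.
  have hen : 0 <= eps1 * n by rewrite mulr_ge0 // ltW.
  rewrite /r; nra.
have E : - (eps1 * n * c) * `|e| = - (eps / 2 * n) * ys e.
  rewrite /eps1; field; rewrite ?gt_eqF //.
have hr : - (eps / 2 * n) <= r * `|e|.
  rewrite -(ler_pM2r yse) -E; nra.
pose m := Num.min r 0.
pose p := r - m.
have hp : 0 <= p by rewrite /p subr_ge0 ge_min lexx.
have hm : `|m *: e| <= eps / 2 * n.
  rewrite normrZ /m; case: (leP 0 r) => hr0.
    by rewrite normr0 mul0r mulr_ge0 // ltW.
  rewrite ltr0_norm //; lra.
have [y' [k' [d [hy' Kk' hd heqT]]]] :=
  HdT x hxT (y - f x) k (ex_intro2 _ _ y Fxy erefl) Kk.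
case: hy' => y0 Fy0 hy0; subst y'.
pose w := (eps / 2 * n) *: d + m *: e.
have hw : `|w| <= eps * n.
  rewrite /w (le_trans (ler_normD _ _)) // normrZ.
  have hh0 : 0 <= eps / 2 * n by rewrite mulr_ge0 // ltW.
  have hh : `|eps / 2 * n| * `|d| <= eps / 2 * n.
    by rewrite ger0_norm //; nra.
  lra.
exists y0; exists (k' + p *: e); exists ((eps * n)^-1 *: w); split => //.
- by apply: KD => //; apply: Kscale.
- rewrite normrZ; have [->|nz] := eqVneq n 0.
    by rewrite mulr0 invr0 normr0 mul0r.
  have en1 : 0 < eps * n by rewrite mulr_gt0 // lt_def nz.
  rewrite ger0_norm ?invr_ge0 ?(ltW en1) //.
  apply: le_trans (ler_wpM2l _ hw) _; first by rewrite invr_ge0 ltW.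
  by rewrite mulVf // gt_eqF.
have hw2 : (eps * n) *: ((eps * n)^-1 *: w) = w.
  rewrite scalerA; have [n00|nz] := eqVneq n 0.
    have hr0 : 0 <= r.
      move: hr; rewrite n00 mulr0 oppr0 => h.
      by rewrite -(pmulr_lge0 _ en).
    by rewrite /w /m n00 min_r // !mulr0 !scale0r addr0 scaler0.
  by rewrite mulfV ?scale1r // mulf_neq0 // gt_eqF.
rewrite hw2 /S -/q /w.
apply: rearr heqT _.
rewrite /f -!scalerDl -scalerBl; congr (_ *: _).
rewrite /p /r; ring.
Qed.
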